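(* Let $r\ge 2$, let $P_1,\dots,P_r$ be nonempty point sets in $\mathbb{R}^d$, let $D=\max_{i\in[r]}\operatorname{diam}P_i$, and let $t\in[r-1]$. Let $a\in\mathbb{R}^d$ and assume that for all distinct $i_1,\dots,i_t\in[r]$ we have $a\in\operatorname{conv}(P_{i_1}\cup\dots\cup P_{i_t})$. Then there exists a transversal $T=\{p_1,\dots,p_r\}$ (with $p_i\in P_i$ for all $i$) such that \[ d(a,\operatorname{conv}T)\le \beta\cdot\frac{D}{\sqrt{r-t+1}},\qquad \beta=4\sqrt{\frac{\ln 4}{3}}. \]
   Context: $d(a,S)$ denotes Euclidean distance from a point to a set; $\operatorname{diam}$ is Euclidean diameter; $[m]=\{1,\dots,m\}$. *)

(* Defs.v *)
From HB Require Import structures.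
From mathcomp Require Import all_boot all_order all_algebra.
From mathcomp Require Import all_classical all_reals all_analysis.
Set Implicit Arguments. Unset Strict Implicit. Unset Printing Implicit Defensive.
Import Order.TTheory GRing.Theory Num.Theory.
Local Open Scope ring_scope.
Local Open Scope classical_set_scope.

Section Defs.
Variables (R : realType) (d : nat).
Notation pt := 'rV[R]_d.

(* Euclidean norm on R^d (the library norm on matrices is the max norm). *)
Definition enorm (v : pt) : R := Num.sqrt (\sum_(k < d) (v ord0 k) ^+ 2).

Definition conv_hull (s : seq pt) : set pt :=
  [set x | exists lam : 'I_(size s) -> R,
     (forall j, 0 <= lam j) /\ \sum_j lam j = 1 /\
     x = \sum_j lam j *: s`_j].

Definition dist_set (a : pt) (A : set pt) : R :=
  inf [set enorm (a - x) | x in A].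

Definition diam (s : seq pt) : R :=
  \big[Num.max/0]_(x <- s) \big[Num.max/0]_(y <- s) enorm (x - y).

End Defs.

(* Main.v *)
Require Import Defs.
From HB Require Import structures.
From mathcomp Require Import all_boot all_order all_algebra.
From mathcomp Require Import all_classical all_reals all_analysis.
From mathcomp Require Import ring lra zify.
Import Order.TTheory GRing.Theory Num.Theory.
Local Open Scope ring_scope.
Local Open Scope classical_set_scope.

Lemma inf_le_elt (R : realType) (E : set R) x : (forall y, E y -> 0 <= y) -> E x -> inf E <= x.
Proof.
move=> h0 Ex.
have -> : x = inf [set x] by rewrite inf1.
apply: inf_le.
- by move=> _ [y /= -> <-]; exists (- x) => //; exists x.
- by exists x.
- split; first by exists x. by exists 0 => y /h0.
Qed.

Lemma var_id (R : realFieldType) n (mu X : 'I_n -> R) (U : R) :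
  let A := \sum_j mu j in let B := \sum_j mu j * X j in
  \sum_j mu j * (U + (A * X j - B)) ^+ 2 =
  A * U ^+ 2 + A / 2%:R * \sum_j \sum_l mu j * mu l * (X j - X l) ^+ 2.
Proof.
move=> A B.
have e1 : \sum_j mu j * (U + (A * X j - B)) ^+ 2 =
   (U - B) ^+ 2 * A + (2%:R * (U - B) * A) * B + A ^+ 2 * \sum_j mu j * X j ^+ 2.
  rewrite /A /B mulr_sumr mulr_sumr mulr_sumr -!big_split /=.
  by apply: eq_bigr => j _; ring.
have e2 : \sum_j \sum_l mu j * mu l * (X j - X l) ^+ 2 =
   2%:R * (A * \sum_j mu j * X j ^+ 2) - 2%:R * B ^+ 2.
  transitivity (\sum_j ((mu j * X j ^+ 2) * A - 2%:R * (mu j * X j) * B + mu j * \sum_l mu l * X l ^+ 2)).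
    apply: eq_bigr => j _; rewrite /A /B !mulr_sumr -sumrN -!big_split /=.
    by apply: eq_bigr => l _; ring.
  rewrite !big_split /= sumrN -!mulr_suml -mulr_sumr -/A -/B.
  ring.
by rewrite e1 e2; field.
Qed.

Section Work.
Variables (R : realType) (d : nat).
Local Notation pt := 'rV[R]_d.

Lemma conv_nat (s : seq pt) z : conv_hull s z ->
  exists c : nat -> R, (forall j, 0 <= c j) /\ \sum_(j < size s) c j = 1 /\
    z = \sum_(j < size s) c j *: s`_j.
Proof.
case=> lam [l0 [l1 ->]].
pose c (j : nat) := if (insub j : option 'I_(size s)) is Some k then lam k else 0.
have cE (k : 'I_(size s)) : c k = lam k by rewrite /c valK.
exists c; split; first by move=> j; rewrite /c; case: insub.
split; first by rewrite -l1; apply: eq_bigr => k _; rewrite cE.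
by apply: eq_bigr => k _; rewrite cE.
Qed.

Lemma nat_conv (s : seq pt) z (c : nat -> R) : (forall j, 0 <= c j) ->
  \sum_(j < size s) c j = 1 -> z = \sum_(j < size s) c j *: s`_j -> conv_hull s z.
Proof. by move=> c0 c1 ->; exists (fun j => c j). Qed.

Variables (r : nat) (P : 'I_r -> seq pt).

Definition wt (M : 'I_r -> nat -> R) i := \sum_(j < size (P i)) M i j.
Definition tot M := \sum_i wt M i.
Definition vec M := \sum_i \sum_(j < size (P i)) M i j *: (P i)`_j.

Lemma sum_deltaR (G : 'I_r -> R) i0 : \sum_i (i == i0)%:R * G i = G i0.
Proof.
rewrite (bigD1 i0) //= eqxx mul1r big1 ?addr0 // => i /negbTE ->; by rewrite mul0r.
Qed.

Lemma sum_deltaV (G : 'I_r -> pt) i0 : \sum_i (i == i0)%:R *: G i = G i0.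
Proof.
rewrite (bigD1 i0) //= eqxx scale1r big1 ?addr0 // => i /negbTE ->; by rewrite scale0r.
Qed.

Lemma flat_rep (l : seq 'I_r) (c : nat -> R) : (forall j, 0 <= c j) ->
 exists M : 'I_r -> nat -> R, (forall i j, 0 <= M i j) /\
  (forall i, i \notin l -> forall j, M i j = 0) /\
  tot M = \sum_(j < size (flatten (map P l))) c j /\
  vec M = \sum_(j < size (flatten (map P l))) c j *: (flatten (map P l))`_j.
Proof.
elim: l c => [|i0 l IH] c c0 /=.
  exists (fun _ _ => 0); split => //; split => //; rewrite /tot /vec /wt !big_ord0.
  by split; apply: big1 => i _; apply: big1 => j _ //; rewrite scale0r.
have [M [M0 [Ms [Mt Mv]]]] := IH (fun j => c (size (P i0) + j)%N) (fun j => c0 _).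
exists (fun i j => M i j + (i == i0)%:R * c j).
split; first by move=> i j; apply: addr_ge0 => //; apply: mulr_ge0 => //; apply: ler0n.
split.
  by move=> i; rewrite in_cons negb_or => /andP [/negbTE -> /Ms h] j; rewrite h mul0r addr0.
rewrite size_cat big_split_ord /=.
split.
  rewrite /tot /wt /=; under eq_bigr do rewrite big_split /=.
  rewrite big_split /= -Mt [RHS]addrC; congr (_ + _).
  rewrite -(sum_deltaR (fun i => \sum_(j < size (P i)) c j)).
  by apply: eq_bigr => i _; rewrite mulr_sumr.
rewrite /vec /=; under eq_bigr do under eq_bigr do rewrite scalerDl.
under eq_bigr do rewrite big_split /=.
rewrite big_split /= big_split_ord /= [RHS]addrC; congr (_ + _).
  rewrite -/(vec M) Mv; apply: eq_bigr => j _.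
  by rewrite nth_cat ltnNge leq_addr /= addKn.
transitivity (\sum_(j < size (P i0)) c j *: (P i0)`_j); last first.
  by apply: eq_bigr => j _; rewrite nth_cat ltn_ord.
rewrite -(sum_deltaV (fun i => \sum_(j < size (P i)) c j *: (P i)`_j)).
apply: eq_bigr => i _; rewrite scaler_sumr; apply: eq_bigr => j _.
by rewrite -scalerA.
Qed.


Lemma sub_card (A : {set 'I_r}) (t : nat) : (t <= #|A|)%N ->
  exists S : {set 'I_r}, (forall i, i \in S -> i \in A) /\ #|S| = t.
Proof.
move=> tA; exists [set i in take t (enum A)]; split.
  by move=> i; rewrite inE => /mem_take; rewrite mem_enum.
rewrite cardsE; move/card_uniqP: (take_uniq t (enum_uniq (mem A))) => ->.
by rewrite size_takel // -cardE.
Qed.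

Lemma sum_sub_le (B : {set 'I_r}) (F : 'I_r -> R) : (forall i, 0 <= F i) ->
  \sum_(i in B) F i <= \sum_i F i.
Proof.
move=> F0; rewrite [X in _ <= X](bigID (fun i => i \in B)) /= lerDl.
by apply: sumr_ge0.
Qed.

Lemma le_sum_one (F : 'I_r -> R) i0 : (forall i, 0 <= F i) -> F i0 <= \sum_i F i.
Proof.
move=> F0; rewrite (bigD1 i0) //= lerDl; by apply: sumr_ge0.
Qed.

Lemma wt_ge0 M i : (forall i j, 0 <= M i j) -> 0 <= wt M i.
Proof. by move=> M0; apply: sumr_ge0. Qed.

Definition nsq (v : pt) := \sum_(k < d) (v ord0 k) ^+ 2.
Lemma nsq_ge0 v : 0 <= nsq v.
Proof. by apply: sumr_ge0 => k _; apply: sqr_ge0. Qed.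
Lemma nsqN v : nsq (- v) = nsq v.
Proof. by apply: eq_bigr => k _; rewrite mxE sqrrN. Qed.
Lemma nsq0 : nsq 0 = 0.
Proof. by apply: big1 => k _; rewrite mxE expr0n. Qed.

Section Derand.
Variables (M : 'I_r -> nat -> R) (D2 : R).
Hypothesis M0 : forall i j, 0 <= M i j.
Hypothesis Pne : forall i, P i != [::].
Hypothesis HD : forall i (j l : 'I_(size (P i))), nsq ((P i)`_j - (P i)`_l) <= D2.

Definition yv i (x : pt) := wt M i *: x - \sum_(j < size (P i)) M i j *: (P i)`_j.

Lemma yv_coord i x k : yv i x ord0 k =
  wt M i * x ord0 k - \sum_(j < size (P i)) M i j * (P i)`_j ord0 k.
Proof.
by rewrite !mxE summxE; congr (_ - _); apply: eq_bigr => j _; rewrite mxE.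
Qed.

Lemma key_id u i : \sum_(j < size (P i)) M i j * nsq (u + yv i (P i)`_j) =
  wt M i * nsq u + wt M i / 2%:R *
   \sum_(j < size (P i)) \sum_(l < size (P i)) M i j * M i l * nsq ((P i)`_j - (P i)`_l).
Proof.
rewrite /nsq; under eq_bigr do rewrite mulr_sumr.
rewrite exchange_big /= mulr_sumr.
under [X in _ = _ + _ * X]eq_bigr do under eq_bigr do rewrite mulr_sumr.
under [X in _ = _ + _ * X]eq_bigr do rewrite exchange_big /=.
rewrite [X in _ = _ + _ * X]exchange_big /= [X in _ = _ + X]mulr_sumr -big_split /=.
apply: eq_bigr => k _.
have := @var_id R (size (P i)) (fun j : 'I_(size (P i)) => M i j) (fun j : 'I_(size (P i)) => (P i)`_j ord0 k) (u ord0 k).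
move=> e; rewrite /wt; under [X in _ = _ + _ * X]eq_bigr do under eq_bigr do rewrite !mxE. rewrite -e.
apply: eq_bigr => j _; rewrite mxE yv_coord //.
Qed.


Lemma step u i : exists x, x \in P i /\ nsq (u + yv i x) <= nsq u + D2 * wt M i ^+ 2.
Proof.
have sz : (0 < size (P i))%N by rewrite lt0n size_eq0 Pne.
have D20 : 0 <= D2 by have := HD i (Ordinal sz) (Ordinal sz); rewrite subrr nsq0.
have w0 : 0 <= wt M i := wt_ge0 M i M0.
pose B := nsq u + D2 * wt M i ^+ 2.
case: (boolP [exists j : 'I_(size (P i)), nsq (u + yv i (P i)`_j) <= B]).
  by case/existsP => j hj; exists (P i)`_j; split => //; apply: mem_nth.
rewrite negb_exists => /forallP hall; exfalso.
have hlt (j : 'I_(size (P i))) : B < nsq (u + yv i (P i)`_j) by have := hall j; rewrite -ltNge.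
have bnd : \sum_(j < size (P i)) \sum_(l < size (P i)) M i j * M i l * nsq ((P i)`_j - (P i)`_l)
    <= wt M i ^+ 2 * D2.
  apply: le_trans (_ : \sum_(j < size (P i)) \sum_(l < size (P i)) M i j * M i l * D2 <= _).
    apply: ler_sum => j _; apply: ler_sum => l _; apply: ler_wpM2l => //.
    by apply: mulr_ge0.
  rewrite le_eqVlt; apply/orP; left; apply/eqP.
  rewrite /wt expr2 -mulrA mulr_suml; apply: eq_bigr => j _.
  by rewrite mulr_suml mulr_sumr; apply: eq_bigr => l _; rewrite mulrA.
have sle : \sum_(j < size (P i)) M i j * (nsq (u + yv i (P i)`_j) - B) <= 0.
  under eq_bigr do rewrite mulrBr.
  rewrite sumrB key_id -/(wt M i) -mulr_suml.
  have h1 : wt M i / 2%:R * (\sum_(j < size (P i)) \sum_(l < size (P i))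
     M i j * M i l * nsq ((P i)`_j - (P i)`_l)) <= wt M i * (wt M i ^+ 2 * D2).
    apply: le_trans (_ : wt M i / 2%:R * (wt M i ^+ 2 * D2) <= _).
      by apply: ler_wpM2l => //; apply: divr_ge0.
    apply: ler_wpM2r; first by apply: mulr_ge0 => //; apply: sqr_ge0.
    by rewrite ler_pdivrMr // ler_peMr // ler1n.
  rewrite subr_le0 /B mulrDr; apply: lerD => //.
  by rewrite (mulrC D2); apply: (le_trans h1); rewrite mulrA.
have nn : forall k : 'I_(size (P i)), 0 <= M i k * (nsq (u + yv i (P i)`_k) - B).
  by move=> k; apply: mulr_ge0 => //; rewrite subr_ge0 ltW.
have s0 : \sum_(k < size (P i)) M i k * (nsq (u + yv i (P i)`_k) - B) = 0.
  by apply/eqP; rewrite eq_le sle /=; apply: sumr_ge0 => k _.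
have Mz : forall j : 'I_(size (P i)), M i j = 0.
  move=> j; have := @psumr_eq0P R _ xpredT _ (fun k _ => nn k) s0 j isT.
  move/eqP; rewrite mulf_eq0 => /orP [/eqP //|]; rewrite subr_eq0 => /eqP e.
  by have := hlt j; rewrite e ltxx.
have y0 : yv i (P i)`_(Ordinal sz) = 0.
  rewrite /yv (_ : wt M i = 0); last by rewrite /wt big1 // => j _; rewrite Mz.
  by rewrite scale0r sub0r big1 ?oppr0 // => j _; rewrite Mz scale0r.
by have := hlt (Ordinal sz); rewrite y0 addr0 /B ltNge lerDl mulr_ge0 // sqr_ge0.
Qed.

Lemma seq_derand (l : seq 'I_r) : uniq l -> exists p : 'I_r -> pt, (forall i, p i \in P i) /\
  nsq (\sum_(i <- l) yv i (p i)) <= D2 * \sum_(i <- l) wt M i ^+ 2.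
Proof.
elim: l => [_|i0 l IH /= /andP [ni0 ul]].
  exists (fun i => (P i)`_0); split; first by move=> i; apply: mem_nth; rewrite lt0n size_eq0 Pne.
  by rewrite !big_nil nsq0 mulr0.
have [p [pP hp]] := IH ul.
have [x [xP hx]] := step (\sum_(i <- l) yv i (p i)) i0.
exists (fun i => if i == i0 then x else p i); split.
  by move=> i; case: eqP => // ->.
rewrite !big_cons eqxx.
rewrite (@eq_big_seq _ _ _ _ _ _ (fun i => yv i (p i))); last first.
  by move=> i il; case: eqP => // ei; rewrite -ei il in ni0.
rewrite [yv i0 x + _]addrC; apply: (le_trans hx); rewrite mulrDr [X in _ <= X]addrC lerD2r //.
Qed.

End Derand.

Variables (t : nat) (a : pt).
Hypothesis tr : (t <= r)%N.
Hypothesis Hyp : forall S : {set 'I_r}, #|S| = t ->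
     conv_hull (flatten [seq P i | i in S]) a.
Let mR : R := ((r - t).+1)%:R.

Lemma repS (S : {set 'I_r}) : #|S| = t -> exists M, (forall i j, 0 <= M i j) /\
  (forall i, i \notin S -> forall j, M i j = 0) /\ tot M = 1 /\ vec M = a.
Proof.
move=> /Hyp /conv_nat [c [c0 [c1 ca]]].
have [M [M0 [Ms [Mt Mv]]]] := @flat_rep (enum S) c c0.
exists M; split => //; split; first by move=> i iS; apply: Ms; rewrite mem_enum.
by split; [rewrite Mt c1 | rewrite Mv ca].
Qed.

Lemma greedy (k : nat) : exists M, (forall i j, 0 <= M i j) /\ tot M = k%:R /\
  vec M = k%:R *: a /\ \sum_i (wt M i) ^+ 2 <= k%:R ^+ 2 / mR + k%:R.
Proof.
have mR0 : 0 < mR by rewrite /mR ltr0n.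
elim: k => [|k [M [M0 [Mt [Mv MW]]]]].
  exists (fun _ _ => 0); split => //.
  have W0 : forall i, wt (fun _ _ => 0) i = 0 by move=> i; rewrite /wt big1.
  rewrite /tot /vec; split; first by apply: big1 => i _; rewrite W0.
  split; first by rewrite scale0r; apply: big1 => i _; apply: big1 => j _; rewrite scale0r.
  by rewrite big1 ?expr0n /= ?mul0r ?addr0 // => i _; rewrite W0 expr0n.
pose A : {set 'I_r} := [set i | wt M i <= k%:R / mR]%SET.
have tA : (t <= #|A|)%N.
  rewrite leqNgt; apply/negP => At.
  have mB : ((r - t).+1 <= #|~: A|)%N.
    by move: (cardsC A) tr; rewrite card_ord => cA; lia.
  have : \sum_(i in ~: A) (k%:R / mR) < \sum_(i in ~: A) wt M i.
    apply: ltr_sum.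
      apply/hasP; have : (0 < #|~: A|)%N by lia.
      by case/card_gt0P => i iB; exists i; rewrite ?mem_index_enum.
    by move=> i; rewrite !inE -ltNge.
  rewrite sumr_const -[_ *+ #|_|]mulr_natl.
  have h1 : \sum_(i in ~: A) wt M i <= k%:R by rewrite -Mt; apply: sum_sub_le => i; apply: wt_ge0.
  have h2 : mR <= #|~: A|%:R by rewrite /mR ler_nat.
  have h3 : mR * (k%:R / mR) = k%:R by rewrite mulrC divfK // gt_eqF.
  have h4 : 0 <= k%:R / mR by apply: divr_ge0 => //; apply: ltW.
  have h5 : mR * (k%:R / mR) <= #|~: A|%:R * (k%:R / mR) by apply: ler_wpM2r.
  move=> hlt; have := lt_le_trans (le_lt_trans h5 hlt) h1; by rewrite h3 ltxx.
have [S [SA St]] := @sub_card A t tA.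
have [N [N0 [Ns [Nt Nv]]]] := @repS S St.
exists (fun i j => M i j + N i j).
have wtD : forall i, wt (fun i j => M i j + N i j) i = wt M i + wt N i.
  by move=> i; rewrite /wt big_split.
split; first by move=> i j; apply: addr_ge0.
split; first by rewrite /tot; under eq_bigr do rewrite wtD; move: Mt Nt; rewrite /tot big_split /= => -> ->; rewrite natr1.
split.
  rewrite /vec; under eq_bigr do under eq_bigr do rewrite scalerDl.
  under eq_bigr do rewrite big_split /=.
  by rewrite big_split /= -/(vec M) -/(vec N) Mv Nv -natr1 scalerDl scale1r.
under eq_bigr do rewrite wtD sqrrD.
rewrite big_split big_split /=.
have hWN : \sum_i wt M i * wt N i *+ 2 <= (k%:R / mR) *+ 2.
  rewrite sumrMnl lerMn2r /=.
  have -> : k%:R / mR = k%:R / mR * tot N by rewrite Nt mulr1.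
  rewrite /tot mulr_sumr; apply: ler_sum => i _.
  case: (boolP (i \in S)) => iS.
    apply: ler_wpM2r; first by apply: wt_ge0.
    by move: (SA i iS); rewrite /A inE.
  have -> : wt N i = 0 by rewrite /wt big1 // => j _; rewrite Ns.
  by rewrite !mulr0.
have hN : \sum_i wt N i ^+ 2 <= 1.
  rewrite -Nt /tot; apply: ler_sum => i _; rewrite expr2 -[X in _ <= X]mul1r.
  apply: ler_wpM2r; first by apply: wt_ge0.
  by rewrite -Nt; apply: le_sum_one => i'; apply: wt_ge0.
have e : (k.+1)%:R ^+ 2 / mR = k%:R ^+ 2 / mR + (k%:R / mR) *+ 2 + mR^-1.
  by rewrite -natr1 mulr2n; field; rewrite gt_eqF.
have : 0 <= mR^-1 by rewrite invr_ge0 ltW.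
rewrite e -natr1 sumrMnl; rewrite sumrMnl in hWN; rewrite !mulr2n in hWN *. move=> h; apply: le_trans (lerD (lerD MW hWN) hN) _. move: h; set K := k%:R ^+ 2 / mR; set L := k%:R / mR; set mi := mR^-1; set kk := k%:R; clearbody K L mi kk; move=> h; lra.
Qed.

Lemma ln4_ge : 3 / 4 <= ln (4 : R).
Proof.
have h := expR_ge1Dx (- ln (4 : R)).
rewrite expRN lnK ?posrE // in h.
have e : (4 : R)^-1 = 1 / 4 by rewrite div1r.
rewrite e in h; lra.
Qed.

Lemma diam_ge0 (s : seq pt) : 0 <= diam s.
Proof.
rewrite /diam; elim/big_ind: _ => //; first by move=> x y hx hy; rewrite le_max hx.
move=> x _; elim/big_ind: _ => //; first by move=> u v hu hv; rewrite le_max hu.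
by move=> y _; apply: sqrtr_ge0.
Qed.

Lemma D0 : 0 <= \big[Num.max/0]_(i < r) diam (P i).
Proof.
elim/big_ind: _ => //; last by move=> i _; apply: diam_ge0.
by move=> x y hx hy; rewrite le_max hx.
Qed.

Lemma diam_le i x y : x \in P i -> y \in P i ->
  enorm (x - y) <= \big[Num.max/0]_(i < r) diam (P i).
Proof.
move=> xi yi; apply: (le_trans _ (le_bigmax _ (fun i => diam (P i)) i)).
rewrite /diam; apply: (le_trans _ (le_bigmax_seq _ _ _ _ xi isT)).
exact: (le_bigmax_seq _ _ _ (fun y => enorm (x - y)) yi isT).
Qed.

Lemma main_bound : (forall i, P i != [::]) ->
  exists p : 'I_r -> 'rV[R]_d,
    (forall i, p i \in P i) /\
    dist_set a (conv_hull [seq p i | i : 'I_r])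
      <= 4 * Num.sqrt (ln 4 / 3) *
         (\big[Num.max/0]_(i < r) diam (P i)) / Num.sqrt ((r - t).+1)%:R.
Proof.
move=> hP.
have mpos : 0 < mR by rewrite /mR ltr0n.
have [M [M0 [Mt [Mv MW]]]] := greedy (r - t).+1.
pose N i j := M i j / mR.
have N0 : forall i j, 0 <= N i j by move=> i j; rewrite /N divr_ge0 // ltW.
have wtN : forall i, wt N i = wt M i / mR by move=> i; rewrite /wt mulr_suml.
have totN : tot N = 1.
  rewrite /tot; under eq_bigr do rewrite wtN.
  by rewrite -mulr_suml -/(tot M) Mt -/mR divff // gt_eqF.
have vecN : vec N = a.
  rewrite /vec; under eq_bigr do under eq_bigr do rewrite /N mulrC -scalerA.
  under eq_bigr do rewrite -scaler_sumr.
  by rewrite -scaler_sumr -/(vec M) Mv -/mR scalerA mulVf ?scale1r // gt_eqF.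
have sqN : \sum_i wt N i ^+ 2 <= 2 / mR.
  under eq_bigr do rewrite wtN expr_div_n.
  rewrite -mulr_suml ler_pdivrMr ?exprn_gt0 //.
  apply: (le_trans MW); rewrite -/mR.
  have -> : mR ^+ 2 / mR + mR = 2 / mR * mR ^+ 2 by field; rewrite gt_eqF.
  by [].
set D := \big[Num.max/0]_(i < r) diam (P i).
have HD : forall i (j l : 'I_(size (P i))), nsq ((P i)`_j - (P i)`_l) <= D ^+ 2.
  move=> i j l.
  have h := @diam_le i _ _ (mem_nth 0 (ltn_ord j)) (mem_nth 0 (ltn_ord l)).
  rewrite -(sqr_sqrtr (nsq_ge0 _)) !expr2.
  by apply: ler_pM => //; apply: sqrtr_ge0.
have [p [pP hp]] := @seq_derand N (D ^+ 2) N0 hP HD _ (index_enum_uniq 'I_r).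
exists p; split => //.
set z := \sum_i wt N i *: p i.
have ez : \sum_(i <- index_enum 'I_r) yv N i (p i) = z - a.
  by rewrite /yv sumrB -vecN.
rewrite ez in hp.
have za : nsq (a - z) <= D ^+ 2 * (2 / mR).
  rewrite -opprB nsqN; apply: (le_trans hp); apply: ler_wpM2l => //.
  by apply: sqr_ge0.
have zC : conv_hull [seq p i | i : 'I_r] z.
  pose c (j : nat) := if (insub j : option 'I_r) is Some i then wt N i else 0.
  have cE (i : 'I_r) : c i = wt N i by rewrite /c valK.
  have ss : size [seq p i | i : 'I_r] = r by rewrite size_map size_enum_ord.
  apply: (@nat_conv _ z c).
  - by move=> j; rewrite /c; case: insub => // i; apply: wt_ge0.
  - rewrite ss -totN; apply: eq_bigr => i _; exact: cE.
  - rewrite ss; apply: eq_bigr => i _; rewrite cE; congr (_ *: _).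
    by rewrite (nth_map i) ?size_enum_ord // nth_ord_enum.
have T0 : 0 <= 4 * Num.sqrt (ln 4 / 3) * D / Num.sqrt mR.
  apply: divr_ge0; last by apply: sqrtr_ge0.
  by apply: mulr_ge0; [apply: mulr_ge0 => //; apply: sqrtr_ge0 | apply: D0].
apply: le_trans (_ : enorm (a - z) <= _).
  apply: inf_le_elt; first by move=> y [x _ <-]; apply: sqrtr_ge0.
  by exists z.
rewrite /enorm -/(nsq (a - z)) -(ger0_norm T0) -sqrtr_sqr ler_sqrt ?sqr_ge0 //.
apply: (le_trans za).
have L0 : 0 <= ln (4 : R) / 3.
  by apply: divr_ge0 => //; apply: ln_ge0; rewrite (ler_nat _ 1 4).
rewrite !exprMn exprVn (sqr_sqrtr (ltW mpos)) (sqr_sqrtr L0).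
have hL := ln4_ge.
set L := ln 4 in hL *; set Q := D ^+ 2; set iM := mR^-1.
have Q0 : 0 <= Q by apply: sqr_ge0.
have iM0 : 0 <= iM by rewrite invr_ge0 ltW.
rewrite /= mulrA -/iM.
clearbody L Q iM. have hX : 0 <= Q * iM by apply: mulr_ge0.
have -> : Q * 2 * iM = 2 * (Q * iM) by ring.
have -> : 4 ^+ 2 * (L / 3) * Q * iM = (16 * L / 3) * (Q * iM) by ring.
apply: ler_wpM2r => //; lra.
Qed.

End Work.

Theorem theorem2p2 (R : realType) (d r t : nat) (P : 'I_r -> seq 'rV[R]_d)
    (a : 'rV[R]_d) :
  (2 <= r)%N ->
  (forall i, P i != [::]) ->
  (1 <= t <= r.-1)%N ->
  (forall S : {set 'I_r}, #|S| = t ->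
     conv_hull (flatten [seq P i | i in S]) a) ->
  exists p : 'I_r -> 'rV[R]_d,
    (forall i, p i \in P i) /\
    dist_set a (conv_hull [seq p i | i : 'I_r])
      <= 4 * Num.sqrt (ln 4 / 3) *
         (\big[Num.max/0]_(i < r) diam (P i)) / Num.sqrt ((r - t).+1)%:R.
Proof.
move=> hr hP /andP [t1 tr1] hS.
have tr : (t <= r)%N by apply: leq_trans tr1 (leq_pred r).
exact: (@main_bound R d r P t a tr hS hP).
Qed.
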